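(* Let the user types be drawn from a distribution $\mathcal D_U$ and the creator types from a distribution $\mathcal D_C$ (arbitrary distributions on non-negative unit vectors of $\mathbb R^D$), and let $U,C,K,D,\bar e,\bar a$ be arbitrary. Then $$\mathbb E\left[\frac{\mathrm{LTE}(\mathbf{UC})}{\mathrm{LTE}(\mathbf{FL})}\,\middle|\,\mathrm{LTE}(\mathbf{FL})>0\right]\le\Pr\left(\text{at least }K\text{ creators stay after }t=0\text{ under }UC_0\,\middle|\,\mathrm{LTE}(\mathbf{FL})>0\right),$$ where ''at least $K$ creators stay after $t=0$ under $UC_0$'' means $|\mathcal C_1|\ge K$ when the user-centric recommendation $UC_0$ is used at $t=0$.
   Context: An instance consists of a dimension $D$, users $\mathcal U_0=\{1,\dots,U\}$ with types $u_i\in\mathbb R^D_{\ge0}$, creators $\mathcal C_0=\{1,\dots,C\}$ with types $c_j\in\mathbb R^D_{\ge 0}$, all of Euclidean norm $1$, a positive integer $K$, a creator threshold $\bar a\in\mathbb N_0$ and a user threshold $\bar e\in[0,1]$. At time $t=0,1,\dots$ the platform has sets $\mathcal U_t,\mathcal C_t$ and chooses $R_t$ assigning each $i\in\mathcal U_t$ a set $R_t(i)\subseteq\mathcal C_t$ of size $K$ (smaller only if necessary). Engagement $E(\mathcal U,\mathcal C,R)=\sum_{i\in\mathcal U}\sum_{j\in R(i)}u_i^Tc_j$. Then $\mathcal U_{t+1}=\{i\in\mathcal U_t:|R_t(i)|=K,\ u_i^Tc_j\ge\bar e\ \forall j\in R_t(i)\}$, $\mathcal C_{t+1}=\{j\in\mathcal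 C_t:|\{i\in\mathcal U_t:j\in R_t(i)\}|\ge\bar a\}$. $\mathrm{LTE}(\mathbf R)=\lim_{T\to\infty}\frac1T\sum_{t<T}E(\mathcal U_t,\mathcal C_t,R_t)$. $\mathbf{FL}$ is any sequence maximizing $\mathrm{LTE}$; $\mathbf{UC}$ is the sequence with $UC_t(i)\in\arg\max_{S\subseteq\mathcal C_t,|S|\le K}\sum_{j\in S}u_i^Tc_j$. *)

(* Defs.v *)
From HB Require Import structures.
From mathcomp Require Import all_boot all_order all_algebra.
From mathcomp Require Import all_classical all_reals all_analysis.

Set Implicit Arguments.
Unset Strict Implicit.
Unset Printing Implicit Defensive.

Import Order.TTheory GRing.Theory Num.Theory.
Import numFieldNormedType.Exports.
Local Open Scope classical_set_scope.
Local Open Scope ring_scope.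

(** Types are vectors of R^D, represented as D-tuples (which carry the
    canonical product sigma-algebra of MathComp-Analysis). *)
Definition ip {R : realType} {D : nat} (x y : D.-tuple R) : R :=
  \sum_(k < D) tnth x k * tnth y k.

Definition unit_nonneg {R : realType} {D : nat} : set (D.-tuple R) :=
  [set x | (forall k, 0 <= tnth x k) /\ ip x x = 1].

Section Dynamics.
Variables (R : realType) (U C D K : nat) (ebar : R) (abar : nat).
Variables (u : 'I_U -> D.-tuple R) (c : 'I_C -> D.-tuple R).

Definition recom := 'I_U -> {set 'I_C}.
Definition state := ({set 'I_U} * {set 'I_C})%type.

Definition valid_recom (s : state) (r : recom) : Prop :=
  forall i, i \in s.1 -> r i \subset s.2 /\ #|r i| = minn K #|s.2|.

Definition engagement (s : state) (r : recom) : R :=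
  \sum_(i in s.1) \sum_(j in r i) ip (u i) (c j).

Definition step (s : state) (r : recom) : state :=
  ([set i in s.1 | (#|r i| == K) &&
                   [forall j in r i, ebar <= ip (u i) (c j)]],
   [set j in s.2 | (abar <= #|[set i in s.1 | j \in r i]|)%N]).

Fixpoint traj (Rs : nat -> recom) (t : nat) : state :=
  match t with
  | 0 => (finset.setT, finset.setT)
  | t'.+1 => step (traj Rs t') (Rs t')
  end.

Definition feasible (Rs : nat -> recom) : Prop :=
  forall t, valid_recom (traj Rs t) (Rs t).

Definition avg_eng (Rs : nat -> recom) (T : nat) : R :=
  (\sum_(t < T) engagement (traj Rs t) (Rs t)) / T%:R.

Definition LTE (Rs : nat -> recom) : R := limn (avg_eng Rs).

Definition LTE_FL : R :=
  sup [set l : R | exists Rs, feasible Rs /\ (avg_eng Rs @ \oo --> l)].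

Definition is_UC (Rs : nat -> recom) : Prop :=
  feasible Rs /\
  forall t i, i \in (traj Rs t).1 ->
    forall S : {set 'I_C}, S \subset (traj Rs t).2 -> (#|S| <= K)%N ->
      \sum_(j in S) ip (u i) (c j) <= \sum_(j in Rs t i) ip (u i) (c j).

End Dynamics.

(* Main.v *)
Require Import Defs.
From HB Require Import structures.
From mathcomp Require Import all_boot all_order all_algebra.
From mathcomp Require Import all_classical all_reals all_analysis.
From mathcomp Require Import ring lra zify.
Import Order.TTheory GRing.Theory Num.Theory.
Import numFieldNormedType.Exports.
Local Open Scope classical_set_scope.
Local Open Scope ring_scope.

Lemma avg_cvg (R : realType) (e : nat -> R) N E :
  (forall t, (N <= t)%N -> e t = E) ->
  (fun T => (\sum_(t < T) e t) / T%:R) @ \oo --> E.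
Proof.
move=> He; rewrite -cvg_shiftS.
set B := \sum_(t < N) e t - N%:R * E.
have h : (fun n => E + B * harmonic n) @ \oo --> E.
  rewrite -[X in _ --> X]addr0; apply: cvgD; first exact: cvg_cst.
  rewrite -(mulr0 B); apply: cvgMl_tmp; exact: cvg_harmonic.
apply: cvg_trans h; apply: near_eq_cvg; near=> n => /=.
have hn : (N <= n.+1)%N by near: n; exists N => // k /= hk; exact: leqW.
rewrite -(big_mkord xpredT) (big_cat_nat (leq0n N) hn) /= big_mkord.
rewrite (eq_big_nat _ _ (F2 := fun=> E)); last by move=> i /andP[hi _]; exact: He.
rewrite sumr_const_nat /B -[E *+ _]mulr_natr natrB //.
have n0 : (n.+1%:R : R) != 0 by rewrite pnatr_eq0.
field.
Unshelve. all: by end_near.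
Qed.

Lemma traj_step_sub (R : realType) (U C D K : nat) (ebar : R) (abar : nat)
  (u : 'I_U -> D.-tuple R) (c : 'I_C -> D.-tuple R) (Rs : nat -> recom U C) t :
  (traj K ebar abar u c Rs t.+1).1 \subset (traj K ebar abar u c Rs t).1 /\
  (traj K ebar abar u c Rs t.+1).2 \subset (traj K ebar abar u c Rs t).2.
Proof.
by split; apply/fintype.subsetP => x /=; rewrite inE => /andP[].
Qed.

Lemma traj_mono (R : realType) (U C D K : nat) (ebar : R) (abar : nat)
  (u : 'I_U -> D.-tuple R) (c : 'I_C -> D.-tuple R) (Rs : nat -> recom U C) t n :
  (t <= n)%N ->
  (traj K ebar abar u c Rs n).1 \subset (traj K ebar abar u c Rs t).1 /\
  (traj K ebar abar u c Rs n).2 \subset (traj K ebar abar u c Rs t).2.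
Proof.
elim: n => [|n IH]; first by rewrite leqn0 => /eqP ->; split.
rewrite leq_eqVlt => /orP[/eqP -> //|]; rewrite ltnS => /IH [h1 h2].
have [s1 s2] := @traj_step_sub _ _ _ _ K ebar abar u c Rs n.
by split; [exact: fintype.subset_trans s1 h1 | exact: fintype.subset_trans s2 h2].
Qed.

Lemma nonincr_stab (f : nat -> nat) : (forall t, (f t.+1 <= f t)%N) ->
  exists N, forall t, (N <= t)%N -> f t = f N.
Proof.
move=> hf.
have mono : forall t n, (t <= n)%N -> (f n <= f t)%N.
  move=> t n; elim: n => [|n IH]; first by rewrite leqn0 => /eqP ->.
  rewrite leq_eqVlt => /orP[/eqP -> //|]; rewrite ltnS => /IH h.
  exact: leq_trans (hf n) h.
suff : forall m t, f t = m -> exists N, forall t, (N <= t)%N -> f t = f N.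
  by move=> /(_ (f 0) 0 erefl).
elim/ltn_ind => m IH t ft.
case: (pselect (exists n, (t <= n)%N /\ f n <> f t)) => [[n [tn fn]]|hno].
  apply: (IH (f n) _ n erefl); rewrite -ft ltn_neqAle mono // andbT.
  by apply/eqP.
exists t => n tn; apply/eqP; apply/negPn/negP => /eqP hne.
by apply: hno; exists n.
Qed.

Lemma traj_stab (R : realType) (U C D K : nat) (ebar : R) (abar : nat)
  (u : 'I_U -> D.-tuple R) (c : 'I_C -> D.-tuple R) (Rs : nat -> recom U C) :
  exists N, forall t, (N <= t)%N ->
    traj K ebar abar u c Rs t = traj K ebar abar u c Rs N.
Proof.
pose f t := (#|(traj K ebar abar u c Rs t).1| + #|(traj K ebar abar u c Rs t).2|)%N.
have [N HN] : exists N, forall t, (N <= t)%N -> f t = f N.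
  apply: nonincr_stab => t; have [s1 s2] := @traj_step_sub _ _ _ _ K ebar abar u c Rs t.
  by rewrite /f leq_add // subset_leq_card.
exists N => t Nt; have := HN t Nt; have [s1 s2] := @traj_mono _ _ _ _ K ebar abar u c Rs _ _ Nt.
rewrite /f => e.
have c1 := subset_leq_card s1; have c2 := subset_leq_card s2.
have e1 : (#|(traj K ebar abar u c Rs N).1| <= #|(traj K ebar abar u c Rs t).1|)%N by lia.
have e2 : (#|(traj K ebar abar u c Rs N).2| <= #|(traj K ebar abar u c Rs t).2|)%N by lia.
case: (traj K ebar abar u c Rs t) s1 s2 e1 e2 => a b.
case: (traj K ebar abar u c Rs N) => a' b' /= s1 s2 e1 e2.
have /eqP -> : a == a' by rewrite eqEcard s1.
have /eqP -> : b == b' by rewrite eqEcard s2.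
by [].
Qed.

Lemma eng_stab (R : realType) (U C D K : nat) (ebar : R) (abar : nat)
  (u : 'I_U -> D.-tuple R) (c : 'I_C -> D.-tuple R) (Rs : nat -> recom U C) :
  is_UC K ebar abar u c Rs ->
  exists N, forall t, (N <= t)%N ->
    engagement u c (traj K ebar abar u c Rs t) (Rs t) =
    engagement u c (traj K ebar abar u c Rs N) (Rs N).
Proof.
move=> [feas opt]; have [N HN] := @traj_stab _ _ _ _ K ebar abar u c Rs.
exists N => t Nt; rewrite /engagement HN //; apply: eq_bigr => i hi.
have hiN := hi; have hit : i \in (traj K ebar abar u c Rs t).1 by rewrite HN.
have [sN cN] := feas N i hiN; have [st ct] := feas t i hit.
rewrite HN // in st.
apply: le_anti; apply/andP; split.
- apply: opt => //; rewrite ct; exact: geq_minl.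
- apply: (opt t i hit); first by rewrite HN.
  rewrite cN; exact: geq_minl.
Qed.

Lemma ip_ge0 (R : realType) (D : nat) (x y : D.-tuple R) :
  (forall k, 0 <= tnth x k) -> (forall k, 0 <= tnth y k) -> 0 <= ip x y.
Proof. by move=> hx hy; apply: sumr_ge0 => k _; apply: mulr_ge0. Qed.

Lemma det_main (R : realType) (U C D K : nat) (ebar : R) (abar : nat)
  (u : 'I_U -> D.-tuple R) (c : 'I_C -> D.-tuple R) (Rs : nat -> recom U C) :
  (forall i k, 0 <= tnth (u i) k) -> (forall j k, 0 <= tnth (c j) k) ->
  is_UC K ebar abar u c Rs ->
  [/\ 0 <= LTE K ebar abar u c Rs,
      (0 < LTE_FL K ebar abar u c -> LTE K ebar abar u c Rs <= LTE_FL K ebar abar u c) &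
      (~~ (K <= #|(traj K ebar abar u c Rs 1).2|)%N -> LTE K ebar abar u c Rs = 0)].
Proof.
move=> hu hc H; have [N HN] := @eng_stab _ _ _ _ K ebar abar u c Rs H.
set E := engagement u c (traj K ebar abar u c Rs N) (Rs N).
have cv : avg_eng K ebar abar u c Rs @ \oo --> E by apply: avg_cvg HN.
have LE : LTE K ebar abar u c Rs = E by rewrite /LTE; apply: cvg_lim.
split.
- rewrite LE; apply: sumr_ge0 => i _; apply: sumr_ge0 => j _; exact: ip_ge0.
- move=> hpos; rewrite LE /LTE_FL.
  set S := [set l : R | _].
  case: (pselect (has_sup S)) => hs; last by move: hpos; rewrite /LTE_FL -/S (sup_out hs) ltxx.
  apply: sup_upper_bound => //; exists Rs; split => //; exact: H.1.
- move=> hK.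
  have z : forall t, (2 <= t)%N -> engagement u c (traj K ebar abar u c Rs t) (Rs t) = 0.
    move=> t t2.
    have e2 : (traj K ebar abar u c Rs 2).1 = finset.set0.
      apply/setP => i; rewrite finset.in_set0; apply/negbTE/negP.
      rewrite /= inE => /andP[hi /andP[/eqP hc' _]].
      have [_ ci] := H.1 1%N i hi.
      move: hK ci hc'; rewrite -ltnNge; move: #|_| #|_| => a b; lia.
    have [s1 _] := @traj_mono _ _ _ _ K ebar abar u c Rs _ _ t2.
    rewrite e2 finset.subset0 in s1.
    by rewrite /engagement (eqP s1) big_set0.
  have cv0 : avg_eng K ebar abar u c Rs @ \oo --> 0 by apply: avg_cvg z.
  by rewrite /LTE; apply: cvg_lim.
Qed.

Theorem lemma10 (R : realType) (U C D K : nat) (ebar : R) (abar : nat)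
  (dO : measure_display) (Omega : measurableType dO) (P : probability Omega R)
  (DU DC : probability (D.-tuple R) R)
  (u : 'I_U -> Omega -> D.-tuple R) (c : 'I_C -> Omega -> D.-tuple R)
  (UC : Omega -> nat -> recom U C) :
  (0 < K)%N -> 0 <= ebar <= 1 ->
  (* types are non-negative unit vectors *)
  (forall i w, unit_nonneg (u i w)) -> (forall j w, unit_nonneg (c j w)) ->
  (* the types are random variables *)
  (forall i, measurable_fun setT (u i)) -> (forall j, measurable_fun setT (c j)) ->
  (* user types have distribution DU, creator types distribution DC *)
  (forall i B, measurable B -> P (u i @^-1` B) = DU B) ->
  (forall j B, measurable B -> P (c j @^-1` B) = DC B) ->
  (* all types are mutually independent *)
  (forall (BU : 'I_U -> set (D.-tuple R)) (BC : 'I_C -> set (D.-tuple R)),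
     (forall i, measurable (BU i)) -> (forall j, measurable (BC j)) ->
     P ((\bigcap_(i in [set: 'I_U]) (u i @^-1` BU i)) `&`
        (\bigcap_(j in [set: 'I_C]) (c j @^-1` BC j)))
     = ((\prod_(i < U) P (u i @^-1` BU i)) *
        (\prod_(j < C) P (c j @^-1` BC j)))%E) ->
  (* UC w is a user-centric sequence for the instance drawn at w *)
  (forall w, is_UC K ebar abar (fun i => u i w) (fun j => c j w) (UC w)) ->
  let FLpos := [set w | 0 < LTE_FL K ebar abar (fun i => u i w) (fun j => c j w)] in
  let stayK := [set w | (K <= #|(traj K ebar abar (fun i => u i w) (fun j => c j w)
                                   (UC w) 1).2|)%N] in
  let ratio := fun w =>
    LTE K ebar abar (fun i => u i w) (fun j => c j w) (UC w) /
    LTE_FL K ebar abar (fun i => u i w) (fun j => c j w) in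
  (* the conditional quantities are well defined *)
  measurable FLpos -> measurable stayK -> measurable_fun FLpos ratio ->
  (0 < P FLpos)%E ->
  ((\int[P]_(w in FLpos) (ratio w)%:E) / P FLpos <= P (FLpos `&` stayK) / P FLpos)%E.
Proof.
move=> K0 ebar01 hU hC _ _ _ _ _ hUC FLpos stayK ratio mFL mSK mratio Ppos.
have key : forall w, FLpos w -> (0 <= ratio w)%R /\ (ratio w <= \1_stayK w)%R.
  move=> w hw.
  have := @det_main R U C D K ebar abar (fun i => u i w) (fun j => c j w) (UC w)
    (fun i => (hU i w).1) (fun j => (hC j w).1) (hUC w).
  case=> h0 hle hz.
  rewrite /ratio indicE; split; first by apply: divr_ge0 => //; exact: ltW.
  case: (pselect (stayK w)) => hs.
  - have -> : (w \in stayK) = true by apply/mem_set.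
    rewrite ler_pdivrMr // mul1r; exact: hle.
  - have -> : (w \in stayK) = false by apply/negbTE/negP => /set_mem.
    by rewrite hz ?mul0r //; apply/negP.
apply: lee_wpmul2r; first by rewrite inve_ge0; exact: measure_ge0.
rewrite setIC -integral_indic //.
apply: ge0_le_integral => //.
- by move=> w /key [h _]; rewrite lee_fin.
- exact/measurable_realfun.measurable_EFinP.
- by apply/measurable_realfun.measurable_EFinP; exact: measurable_realfun.measurable_indic.
- by move=> w /key [_ h]; rewrite lee_fin.
Qed.
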